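(* Let $(K,v)$ be a gdr field with $\operatorname{char}K=0$ and $\operatorname{char}Kv=p>0$, and let $(vK)_p$ denote the smallest convex subgroup of $vK$ containing $vp$. 1) Let $a\in\mathcal{O}_K$ with $va=0$. Then for every $c\in\mathcal{O}_K$ with $0<v(a-c^p)\in(vK)_p$ there is $d\in\mathcal{O}_K$ such that $v(a-d^p)=vp+\frac1p v(a-c^p)$. 2) Let $a\in\mathcal{O}_K$ with $va\in(vK)_p$ and $\operatorname{dist}(a,K^p)<va+\frac{p}{p-1}vp$. Then $$va+vp<\operatorname{dist}(a,K^p)=va+\frac{p}{p-1}vp+H^-$$ where $H$ is a convex subgroup of $\widetilde{vK}$ not containing $vp$.
   Context: Gdr field: $(K,v)$ satisfies (DRvr): the map $x\mapsto x^p$ on $\mathcal{O}_{\hat K}/p\mathcal{O}_{\hat K}$ is surjective ($\hat K$ the completion), and (DRvp): $vp$ is not the smallest positive element of $vK$. $K^p=\{c^p\mid c\in K\}$, $v(a-K^p)=\{v(a-c^p)\mid c\in K\}$. Cuts in the divisible hull $\widetilde{vK}$: $\Lambda=(\Lambda^L,\Lambda^R)$, $\Lambda^L$ initial segment; ordered by inclusion of lower sets; an element $s$ is identified with the cut $(\{t\le s\},\{t>s\})$; $\alpha+\Lambda=(\alpha+\Lambda^L,\alpha+\Lambda^R)$; for a convex subgroup $H$, $H^-$ is the cut with lower set $\{t\mid t<H\}$. $\operatorname{dist}(a,K^p)$ is the cut whose lower set is the smallest initial segment of $\widetilde{vK}$ containing $v(a-K^p)\cap vK$. *)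

(* Defs.v *)
(* A valuation on a field K is given as a map  v : K -> G  into an ordered
   divisible abelian group, realised as the additive group of a
   realFieldType G (only +, -, <= and division by positive integers of G
   are ever used).  The value 0 has no meaningful valuation: v 0 is junk and
   every occurrence of "v x" in the statement comes with "x != 0"
   (v 0 = +oo in the paper). *)
From HB Require Import structures.
From mathcomp Require Import all_boot all_order all_algebra.
Set Implicit Arguments. Unset Strict Implicit. Unset Printing Implicit Defensive.
Import Order.TTheory GRing.Theory Num.Theory.
Local Open Scope ring_scope.

Section Valued.
Variables (K : fieldType) (G : realFieldType) (v : K -> G).

Definition valuation : Prop :=
  (forall x y, x != 0 -> y != 0 -> v (x * y) = v x + v y) /\
  (forall x y, x != 0 -> y != 0 -> x + y != 0 -> Num.min (v x) (v y) <= v (x + y)).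

Definition vring (x : K) : Prop := x = 0 \/ 0 <= v x.

Definition vgroup (g : G) : Prop := exists x, x != 0 /\ v x = g.

Definition vhull (g : G) : Prop := exists n : nat, (0 < n)%N /\ vgroup (g *+ n).

Definition convex_subgroup (A H : G -> Prop) : Prop :=
  (forall g, H g -> A g) /\ H 0 /\
  (forall g h, H g -> H h -> H (g - h)) /\
  (forall g h t, H g -> H h -> A t -> g <= t -> t <= h -> H t).

Definition vKp (p : nat) (g : G) : Prop :=
  vgroup g /\
  forall H, convex_subgroup vgroup H -> H (v p%:R) -> H g.

(* Cuts in the divisible hull are represented by their lower sets. *)
Definition is_cut (L : G -> Prop) : Prop :=
  (forall t, L t -> vhull t) /\
  (forall s t, L t -> vhull s -> s <= t -> L s).

Definition cut_le (L1 L2 : G -> Prop) : Prop := forall t, L1 t -> L2 t.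
Definition cut_lt (L1 L2 : G -> Prop) : Prop := cut_le L1 L2 /\ ~ cut_le L2 L1.
Definition cut_eq (L1 L2 : G -> Prop) : Prop := forall t, L1 t <-> L2 t.

(* the element s viewed as the cut ({t <= s}, {t > s}) *)
Definition cut_pt (s : G) (t : G) : Prop := vhull t /\ t <= s.

Definition cut_shift (alpha : G) (L : G -> Prop) (t : G) : Prop :=
  exists u, L u /\ t = alpha + u.

Definition cut_minus (H : G -> Prop) (t : G) : Prop :=
  vhull t /\ forall h, H h -> t < h.

(* dist(a, K^p): smallest initial segment of the hull containing
   v(a - K^p) \cap vK  (the value +oo, i.e. a = c^p, is excluded) *)
Definition dist (p : nat) (a : K) (t : G) : Prop :=
  vhull t /\ exists c : K, a - c ^+ p != 0 /\ t <= v (a - c ^+ p).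

(* gdr field.  (DRvr) is stated for O_K/pO_K; since vp > 0 this ring is
   canonically isomorphic to O_{\hat K}/pO_{\hat K}. *)
Definition DRvr (p : nat) : Prop :=
  forall x, vring x -> exists y z, vring y /\ vring z /\ x - y ^+ p = p%:R * z.

Definition DRvp (p : nat) : Prop :=
  ~ (vgroup (v p%:R) /\ 0 < v p%:R /\
     forall g, vgroup g -> 0 < g -> v p%:R <= g).

Definition gdr (p : nat) : Prop := DRvr p /\ DRvp p.

End Valued.

(* Main.v *)
From Stdlib Require Import Classical.
Require Import Defs.
From HB Require Import structures.
From mathcomp Require Import all_boot all_order all_algebra.
From mathcomp Require Import ring lra.
Import Order.TTheory GRing.Theory Num.Theory.
Set Implicit Arguments. Unset Strict Implicit. Unset Printing Implicit Defensive.
Local Open Scope ring_scope.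

Section Basics.
Variables (K : fieldType) (G : realFieldType) (v : K -> G).
Hypothesis hv : valuation v.

Lemma vM x y : x != 0 -> y != 0 -> v (x * y) = v x + v y.
Proof. exact: hv.1. Qed.

Lemma v1 : v 1 = 0.
Proof. have := vM (oner_neq0 K) (oner_neq0 K); rewrite mulr1 => h. lra. Qed.

Lemma vN1 : v (-1) = 0.
Proof.
have h1 : (-1 : K) != 0 by rewrite oppr_eq0 oner_neq0.
have := vM h1 h1; rewrite mulrNN mulr1 v1 => h. lra.
Qed.

Lemma vN x : v (- x) = v x.
Proof.
have [->|x0] := eqVneq x 0; first by rewrite oppr0.
have h1 : (-1 : K) != 0 by rewrite oppr_eq0 oner_neq0.
by rewrite -mulN1r vM // vN1 add0r.
Qed.

Lemma vV x : x != 0 -> v x^-1 = - v x.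
Proof.
move=> x0; have := vM x0 (invr_neq0 x0); rewrite mulfV // v1 => h. lra.
Qed.

Lemma vX x n : x != 0 -> v (x ^+ n) = v x *+ n.
Proof.
move=> x0; elim: n => [|n IH]; first by rewrite expr0 v1 mulr0n.
by rewrite exprS vM ?expf_neq0 // IH mulrS.
Qed.

Definition vge (x : K) (g : G) := x = 0 \/ g <= v x.
Definition vgt (x : K) (g : G) := x = 0 \/ g < v x.

Lemma geD x y g : vge x g -> vge y g -> vge (x + y) g.
Proof.
case=> [->|hx]; first by rewrite add0r.
case=> [->|hy]; first by rewrite addr0; right.
have [->|s0] := eqVneq (x + y) 0; first by left.
have [->|x0] := eqVneq x 0; first by rewrite add0r; right.
have [->|y0] := eqVneq y 0; first by rewrite addr0; right.
right; apply: le_trans (hv.2 _ _ x0 y0 s0); by rewrite le_min hx hy.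
Qed.

Lemma gtD x y g : vgt x g -> vgt y g -> vgt (x + y) g.
Proof.
case=> [->|hx]; first by rewrite add0r.
case=> [->|hy]; first by rewrite addr0; right.
have [->|s0] := eqVneq (x + y) 0; first by left.
have [->|x0] := eqVneq x 0; first by rewrite add0r; right.
have [->|y0] := eqVneq y 0; first by rewrite addr0; right.
right; apply: lt_le_trans (hv.2 _ _ x0 y0 s0); by rewrite lt_min hx hy.
Qed.

Lemma geN x g : vge x g -> vge (- x) g.
Proof. by case=> [->|h]; [left; rewrite oppr0|right; rewrite vN]. Qed.
Lemma gtN x g : vgt x g -> vgt (- x) g.
Proof. by case=> [->|h]; [left; rewrite oppr0|right; rewrite vN]. Qed.

Lemma geM x y g h : vge x g -> vge y h -> vge (x * y) (g + h).
Proof.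
case=> [->|hx]; first by rewrite mul0r; left.
case=> [->|hy]; first by rewrite mulr0; left.
have [->|x0] := eqVneq x 0; first by rewrite mul0r; left.
have [->|y0] := eqVneq y 0; first by rewrite mulr0; left.
right; rewrite vM //; lra.
Qed.

Lemma gtM x y g h : vgt x g -> vge y h -> vgt (x * y) (g + h).
Proof.
case=> [->|hx]; first by rewrite mul0r; left.
case=> [->|hy]; first by rewrite mulr0; left.
have [->|x0] := eqVneq x 0; first by rewrite mul0r; left.
have [->|y0] := eqVneq y 0; first by rewrite mulr0; left.
right; rewrite vM //; lra.
Qed.

Lemma ge_le x g h : vge x g -> h <= g -> vge x h.
Proof. case=> [->|hx] hg; [by left|right; lra]. Qed.
Lemma gt_le x g h : vgt x g -> h <= g -> vgt x h.
Proof. case=> [->|hx] hg; [by left|right; lra]. Qed.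
Lemma ge_lt x g h : vge x g -> h < g -> vgt x h.
Proof. case=> [->|hx] hg; [by left|right; lra]. Qed.
Lemma ge_v x : vge x (v x).
Proof. by right. Qed.
Lemma ge0 g : vge 0 g.
Proof. by left. Qed.
Lemma gt0 g : vgt 0 g.
Proof. by left. Qed.

Lemma vring_ge x : vring v x <-> vge x 0.
Proof. by []. Qed.

Lemma ge_nat n : vge n%:R 0.
Proof.
elim: n => [|n IH]; first by left.
rewrite mulrS; apply: geD => //; right; by rewrite v1.
Qed.

Lemma geX x n g : vge x g -> vge (x ^+ n) (g *+ n).
Proof.
move=> h; elim: n => [|n IH]; first by right; rewrite expr0 v1 mulr0n.
by rewrite exprS mulrS; apply: geM.
Qed.

Lemma ge_sum (I : Type) (r : seq I) (P : pred I) (F : I -> K) g :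
  (forall i, P i -> vge (F i) g) -> vge (\sum_(i <- r | P i) F i) g.
Proof.
move=> h; apply: (big_ind (fun x => vge x g)); [by left| |by []].
by move=> a b; apply: geD.
Qed.

Lemma vstrict x y : x != 0 -> vgt y (v x) -> x + y != 0 /\ v (x + y) = v x.
Proof.
move=> x0; case=> [->|hy]; first by rewrite addr0.
have [->|y0] := eqVneq y 0; first by rewrite addr0.
have s0 : x + y != 0.
  apply/eqP => e; have : y = - x by apply/eqP; rewrite -subr_eq0 opprK addrC e.
  move=> ey; move: hy; rewrite ey vN; lra.
split=> //.
have h1 := hv.2 _ _ x0 y0 s0.
have y0' : - y != 0 by rewrite oppr_eq0.
have h2 := hv.2 _ _ s0 y0'; rewrite addrK vN in h2.
move: h1 (h2 x0); rewrite !ge_min.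
case/orP => h1 /orP [] h3; lra.
Qed.

Lemma vstrict' x y : x != 0 -> vgt y (v x) -> v (x + y) = v x.
Proof. by move=> x0 h; case: (vstrict x0 h). Qed.

Lemma vgroup0 : vgroup v 0.
Proof. by exists 1; rewrite oner_neq0 v1. Qed.

Lemma vgroupB g h : vgroup v g -> vgroup v h -> vgroup v (g - h).
Proof.
case=> x [x0 <-] [y [y0 <-]]; exists (x / y); split.
  by rewrite mulf_neq0 ?invr_neq0.
by rewrite vM ?invr_neq0 // vV.
Qed.

Lemma vgroupD g h : vgroup v g -> vgroup v h -> vgroup v (g + h).
Proof.
move=> hg hh; have := vgroupB hg (vgroupB vgroup0 hh); by rewrite sub0r opprK.
Qed.

Lemma vgroupMn g n : vgroup v g -> vgroup v (g *+ n).
Proof.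
move=> hg; elim: n => [|n IH]; first by rewrite mulr0n; apply: vgroup0.
by rewrite mulrS; apply: vgroupD.
Qed.

Lemma vgroup_v x : x != 0 -> vgroup v (v x).
Proof. by move=> x0; exists x. Qed.

Lemma vhull_group g : vgroup v g -> vhull v g.
Proof. by move=> h; exists 1%N. Qed.

Lemma vhullB g h : vhull v g -> vhull v h -> vhull v (g - h).
Proof.
case=> n [n0 hn] [m [m0 hm]]; exists (n * m)%N; split; first by rewrite muln_gt0 n0.
rewrite mulrnBl; apply: vgroupB.
  by rewrite mulrnA; apply: vgroupMn.
by rewrite mulnC mulrnA; apply: vgroupMn.
Qed.

Lemma vhullD g h : vhull v g -> vhull v h -> vhull v (g + h).
Proof.
move=> hg hh; have := vhullB hg (vhullB (vhull_group vgroup0) hh).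
by rewrite sub0r opprK.
Qed.

End Basics.
Definition Wt (K : fieldType) (p : nat) (c e : K) :=
  \sum_(i < p.-2) ('C(p, i.+2) %/ p)%:R * c ^+ (p - i.+2) * e ^+ i.

Lemma binom (K : fieldType) (p : nat) (c e : K) : prime p ->
  (c + e) ^+ p = c ^+ p + e ^+ p + p%:R * c ^+ p.-1 * e + p%:R * e ^+ 2 * Wt p c e.
Proof.
move=> hp; have p2 := prime_gt1 hp.
case: p hp p2 => [|[|q]] // hp _.
rewrite exprDn big_ord_recl big_ord_recl big_ord_recr /=.
rewrite /Wt /= mulr_sumr.
have -> : \sum_(i < q) c ^+ (q.+2 - bump 0 (bump 0 i)) * e ^+ bump 0 (bump 0 i) *+ 'C(q.+2, bump 0 (bump 0 i))
   = \sum_(i < q) q.+2%:R * e ^+ 2 * (('C(q.+2, i.+2) %/ q.+2)%:R * c ^+ (q.+2 - i.+2) * e ^+ i).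
  apply: eq_bigr => i _.
  rewrite /bump /= !add1n.
  have hd : (q.+2 %| 'C(q.+2, i.+2))%N.
    apply: prime_dvd_bin => //; rewrite /= ltnS ltnS ltn_ord //.
  rewrite -mulr_natr -{1}(divnK hd) natrM !exprS; ring.
rewrite subn0 subnn bin0 bin1 binn subn1 /= expr0 expr1 mulr1 mul1r.
idtac.
rewrite /bump /= !add1n -mulr_natr. ring.
Qed.

Section Main.
Variables (K : fieldType) (G : realFieldType) (v : K -> G) (p : nat).
Hypotheses (hv : valuation v) (hp : prime p) (hw : 0 < v (p%:R : K))
  (hdr : DRvr v p) (hdp : DRvp v p) (hpK : (p%:R : K) != 0).

Local Notation w := (v p%:R).
Local Notation vge := (vge v).
Local Notation vgt := (vgt v).

Lemma p2 : (2 <= p)%N. Proof. exact: prime_gt1. Qed.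

Lemma mulrn_p_ge (s : G) : 0 <= s -> s + s <= s *+ p.
Proof.
move=> s0; have := p2; case: p => [|[|q]] // _.
rewrite !mulrS; have : 0 <= s *+ q by apply: mulrn_wge0.
lra.
Qed.

Lemma mulrn_p_gt (s : G) : 0 < s -> s < s *+ p.
Proof. move=> s0; have := mulrn_p_ge (ltW s0); lra. Qed.

Lemma mulrn_p_inj (s t : G) : s *+ p = t *+ p -> s = t.
Proof.
move=> h; apply/eqP; rewrite -subr_eq0; apply/eqP.
have : (s - t) *+ p = 0 by rewrite mulrnBl h subrr.
move/eqP; rewrite mulrn_eq0; case/orP => [/eqP p0|/eqP -> //].
by move: p2; rewrite p0.
Qed.

Lemma ge_vring x : vring v x -> vge x 0.
Proof. by []. Qed.

Lemma small_div (t : G) : vgroup v t -> 0 <= t -> t < w ->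
  exists y, y != 0 /\ v y *+ p = t.
Proof.
case=> x [x0 <-] t0 tw.
have [y [z [yr [zr e]]]] := hdr (or_intror t0 : vring v x).
have gz : vgt (- (p%:R * z)) (v x).
  apply: (gtN hv); have [->|z0] := eqVneq z 0; first by rewrite mulr0; left.
  case: zr => [ez|hz]; first by move: z0; rewrite ez eqxx.
  right; rewrite vM //; lra.
have [s0 sv] := vstrict hv x0 gz.
have ey : x - p%:R * z = y ^+ p by rewrite -e opprB addrC subrK.
rewrite ey in s0 sv.
have y0 : y != 0 by apply: contraNneq s0 => ->; rewrite expr0n /= gtn_eqF ?prime_gt0.
by exists y; split=> //; rewrite -(vX hv).
Qed.

Lemma div_w : exists y, y != 0 /\ v y *+ p = w.
Proof.
apply: NNPP => hn; apply: hdp; split; first exact: vgroup_v.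
split=> // g hg g0; rewrite leNgt; apply/negP => gw.
have [y [y0 ey]] := small_div hg (ltW g0) gw.
have hg' : vgroup v (w - g) by apply: vgroupB => //; exact: vgroup_v.
have wg0 : 0 <= w - g by lra.
have wg1 : w - g < w by lra.
have [z [z0 ez]] := small_div hg' wg0 wg1.
apply: hn; exists (y * z); split; first by rewrite mulf_neq0.
rewrite (vM hv) // mulrnDl ey ez; lra.
Qed.

Lemma div_bound n (t : G) : vgroup v t -> 0 <= t -> t <= w *+ n ->
  exists y, y != 0 /\ v y *+ p = t.
Proof.
elim: n t => [|n IH] t ht t0 tn.
  have -> : t = 0 by rewrite mulr0n in tn; lra.
  by exists 1; rewrite oner_neq0 (v1 hv) mul0rn.
have [tw|tw] := ltP t w; first exact: small_div.
have [y [y0 ey]] := div_w.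
have ht' : vgroup v (t - w) by apply: (vgroupB hv) => //; exact: vgroup_v.
have : t - w <= w *+ n by rewrite mulrS in tn; lra.
have t0' : 0 <= t - w by lra.
case/(IH _ ht' t0') => z [z0 ez].
exists (y * z); split; first by rewrite mulf_neq0.
rewrite (vM hv) // mulrnDl ey ez; lra.
Qed.

Definition bnd (t : G) := exists n, - (w *+ n) <= t /\ t <= w *+ n.

Lemma div_bnd (t : G) : vgroup v t -> bnd t -> exists y, y != 0 /\ v y *+ p = t.
Proof.
move=> ht [n [h1 h2]].
have [t0|t0] := leP 0 t; first exact: (@div_bound n t ht t0 h2).
have ht' : vgroup v (- t) by rewrite -sub0r; apply: (vgroupB hv (vgroup0 hv) ht).
have [y [y0 ey]] := @div_bound n _ ht' ltac:(lra) ltac:(lra).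
exists y^-1; split; first by rewrite invr_neq0.
by rewrite (vV hv) // mulNrn ey opprK.
Qed.

Lemma vKp_bnd (t : G) : vKp v p t -> bnd t.
Proof.
case=> ht hmin.
pose H0 := fun g => vgroup v g /\ bnd g.
suff : H0 t by case.
apply: hmin.
  split; first by move=> g [].
  split; first by split; [exact: vgroup0 | exists 0%N; rewrite mulr0n; lra].
  split.
    move=> g h [hg [n [g1 g2]]] [hh [m [h1 h2]]]; split; first exact: vgroupB.
    exists (n + m)%N; rewrite mulrnDr; lra.
  move=> g h t' [hg [n [g1 g2]]] [hh [m [h1 h2]]] ht' gt ht2; split => //.
  exists (n + m)%N; rewrite mulrnDr.
  have : 0 <= w *+ n by apply: mulrn_wge0; exact: ltW.
  have : 0 <= w *+ m by apply: mulrn_wge0; exact: ltW.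
  lra.
split; first exact: vgroup_v.
exists 1%N; rewrite mulr1n.
have hw2 : 0 < v (p%:R : K) by exact: hw.
split; lra.
Qed.

Lemma bnd_vKp (t : G) : vgroup v t -> bnd t -> vKp v p t.
Proof.
move=> ht [n [h1 h2]]; split => // H [hsub [H0 [HB Hc]]] Hw.
have HN : forall g, H g -> H (- g) by move=> g hg; have := HB _ _ H0 hg; rewrite sub0r.
have HD : forall g h, H g -> H h -> H (g + h).
  by move=> g h hg hh; have := HB _ _ hg (HN _ hh); rewrite opprK.
have Hn : H (w *+ n).
  elim: n {h1 h2} => [|n IH]; first by rewrite mulr0n.
  by rewrite mulrS; apply: HD.
exact: (Hc _ _ _ (HN _ Hn) Hn ht).
Qed.

Lemma div_vKp (t : G) : vKp v p t -> exists y, y != 0 /\ v y *+ p = t.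
Proof. by move=> h; apply: div_bnd; [case: h|exact: vKp_bnd]. Qed.

Lemma geM0 (x y : K) : vge x 0 -> vge y 0 -> vge (x * y) 0.
Proof. by move=> hx hy; have := geM hv hx hy; rewrite addr0. Qed.

Lemma geX0 (x : K) n : vge x 0 -> vge (x ^+ n) 0.
Proof. by move=> h; have := geX hv n h; rewrite mul0rn. Qed.

Lemma geW (c e : K) : vring v c -> vring v e -> vge (Wt p c e) 0.
Proof.
move=> hc he; rewrite /Wt; apply: (ge_sum hv) => i _.
by apply: geM0; [apply: geM0; [exact: ge_nat|]|]; apply: geX0.
Qed.

Lemma step (a c e : K) : c != 0 -> v c = 0 -> e != 0 -> 0 < v e ->
  vgt (a - c ^+ p - e ^+ p) (w + v e) ->
  a - (c + e) ^+ p != 0 /\ v (a - (c + e) ^+ p) = w + v e.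
Proof.
move=> c0 vc e0 ve hY.
have hw2 : 0 < v (p%:R : K) by exact: hw.
rewrite (binom c e hp).
set W := Wt p c e.
have -> : a - (c ^+ p + e ^+ p + p%:R * c ^+ p.-1 * e + p%:R * e ^+ 2 * W)
   = - (p%:R * c ^+ p.-1 * e) + ((a - c ^+ p - e ^+ p) + - (p%:R * e ^+ 2 * W)) by ring.
have X0 : - (p%:R * c ^+ p.-1 * e) != 0 by rewrite oppr_eq0 !mulf_neq0 // expf_neq0.
have vXe : v (- (p%:R * c ^+ p.-1 * e)) = w + v e.
  by rewrite (vN hv) !(vM hv) ?mulf_neq0 ?expf_neq0 // (vX hv) // vc mul0rn addr0.
have hW : vgt (- (p%:R * e ^+ 2 * W)) (w + v e).
  apply: (gtN hv); case: (eqVneq W 0) => [->|W0]; first by rewrite mulr0; left.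
  have ge2 : vge (p%:R * e ^+ 2) (w + v e *+ 2).
    by apply: (geM hv); [exact: ge_v| rewrite -(vX hv) //; exact: ge_v].
  have hc : vring v c by right; rewrite vc.
  have he : vring v e by right; exact: ltW.
  have := geM hv ge2 (geW hc he); rewrite addr0 => h.
  apply: (ge_lt h); have : v e < v e *+ 2 by rewrite mulr2n; lra.
  lra.
have := vstrict hv X0 (y := (a - c ^+ p - e ^+ p) + - (p%:R * e ^+ 2 * W)).
rewrite vXe; apply; exact: (gtD hv).
Qed.

Lemma part1_core (a c : K) : a != 0 -> v a = 0 -> a - c ^+ p != 0 ->
  0 < v (a - c ^+ p) -> vKp v p (v (a - c ^+ p)) ->
  exists d, vring v d /\ a - d ^+ p != 0 /\ v (a - d ^+ p) = w + v (a - c ^+ p) / p%:R.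
Proof.
move=> a0 va b0 bpos hK.
have hw2 : 0 < v (p%:R : K) by exact: hw.
have [pi [pi0 epi]] := div_vKp hK.
have pG0 : (p%:R : G) != 0 by rewrite pnatr_eq0 -lt0n prime_gt0.
have ediv : v (a - c ^+ p) / p%:R = v pi by rewrite -epi -[v pi *+ p]mulr_natr mulfK.
rewrite ediv.
have s0 : 0 < v pi.
  by move: bpos; rewrite -epi -[v pi *+ p]mulr_natr pmulr_lgt0 // ltr0n prime_gt0.
have c0 : c != 0.
  apply/eqP => c0; move: bpos; rewrite c0 expr0n /= gtn_eqF ?prime_gt0 // subr0 va; lra.
have vc : v c = 0.
  have gb : vgt (- (a - c ^+ p)) (v a) by apply: (gtN hv); right; rewrite va.
  have := vstrict' hv a0 gb.
  have -> : a + - (a - c ^+ p) = c ^+ p by ring.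
  rewrite (vX hv) // va => h; apply: mulrn_p_inj; by rewrite h mul0rn.
have cr : vring v c by right; rewrite vc.
have fin : forall e, e != 0 -> v e = v pi ->
    vgt (a - c ^+ p - e ^+ p) (w + v e) ->
    exists d, vring v d /\ a - d ^+ p != 0 /\ v (a - d ^+ p) = w + v pi.
  move=> e e0 ve hg; have ve0 : 0 < v e by rewrite ve.
  have [d0 vd] := step c0 vc e0 ve0 hg.
  exists (c + e); split; last by rewrite vd ve.
  by apply: (geD hv) => //; right; exact: ltW.
case: (ltgtP (v (a - c ^+ p)) (w + v pi)) => hb.
- set b := a - c ^+ p in b0 bpos hK epi hb *.
  set b' := b / pi ^+ p.
  have pp0 : pi ^+ p != 0 by rewrite expf_neq0.
  have eb : b = pi ^+ p * b' by rewrite /b' mulrC divfK.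
  have b'0 : b' != 0 by rewrite mulf_neq0 ?invr_neq0.
  have vb' : v b' = 0.
    by move: (epi); rewrite eb (vM hv) // (vX hv) //; lra.
  have br : vring v b' by right; rewrite vb'.
  have [y [z [yr [zr e]]]] := hdr br.
  have gz : vgt (- (p%:R * z)) (v b').
    apply: (gtN hv); have [->|z0] := eqVneq z 0; first by rewrite mulr0; left.
    case: zr => [ez|hz]; first by move: z0; rewrite ez eqxx.
    right; rewrite (vM hv) // vb'; lra.
  have [s1 sv] := vstrict hv b'0 gz.
  have ey : b' - p%:R * z = y ^+ p by rewrite -e opprB addrC subrK.
  rewrite ey in s1 sv.
  have y0 : y != 0 by apply: contraNneq s1 => ->; rewrite expr0n /= gtn_eqF ?prime_gt0.
  have vy : v y = 0 by apply: mulrn_p_inj; rewrite -(vX hv) // sv vb' mul0rn.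
  apply: (fin (pi * y)); first by rewrite mulf_neq0.
    by rewrite (vM hv) // vy addr0.
  have -> : a - c ^+ p - (pi * y) ^+ p = pi ^+ p * (p%:R * z).
    by rewrite -/b exprMn -e eb; ring.
  have h1 := geM hv (ge_v v (pi ^+ p)) (geM hv (ge_v v p%:R) zr).
  apply: (ge_lt h1); rewrite (vX hv) // (vM hv) // vy addr0.
  have := mulrn_p_gt s0; lra.
- apply: (fin pi) => //.
  apply: (gtD hv); first by right.
  apply: (gtN hv); right; rewrite (vX hv) // epi //.
- exists c; split => //; split => //.
Qed.

Lemma part2 (a : K) : vring v a -> a != 0 -> vKp v p (v a) ->
     cut_lt (dist v p a) (cut_pt v (v a + (p%:R / (p.-1)%:R) * v p%:R)) ->
     cut_lt (cut_pt v (v a + v p%:R)) (dist v p a) /\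
     exists H : G -> Prop,
       convex_subgroup (vhull v) H /\ ~ H (v p%:R) /\
       cut_eq (dist v p a)
              (cut_shift (v a + (p%:R / (p.-1)%:R) * v p%:R) (cut_minus v H)).
Proof.
move=> ar a0 hKa.
set beta := (p%:R / (p.-1)%:R) * v p%:R.
case=> Hle Hnle.
have hw2 : 0 < v (p%:R : K) by exact: hw.
have hP2 : (2 : G) <= p%:R by rewrite ler_nat p2.
have hQ : ((p.-1)%:R : G) = p%:R - 1 by rewrite -subn1 natrB // prime_gt0.
have hQ0 : ((p.-1)%:R : G) != 0 by rewrite hQ; apply/eqP => h; move: hP2 h; lra.
have hbQ : beta * (p.-1)%:R = p%:R * w by rewrite /beta; field.
rewrite hQ in hbQ.
have hb2 : beta <= w + w by nra.
have pG0 : (p%:R : G) != 0 by rewrite pnatr_eq0 -lt0n prime_gt0.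
have pG0' : (0 : G) < p%:R by lra.
have [pi [pi0 epi]] := div_vKp hKa.
have pp0 : pi ^+ p != 0 by rewrite expf_neq0.
have vpp : v (pi ^+ p) = v a by rewrite (vX hv).
set a' := a / pi ^+ p.
have ea : a = pi ^+ p * a' by rewrite /a' mulrC divfK.
have a'0 : a' != 0 by rewrite mulf_neq0 ?invr_neq0.
have va' : v a' = 0 by move: (vpp); rewrite ea (vM hv) //; lra.
have tr : forall c, a - (pi * c) ^+ p = pi ^+ p * (a' - c ^+ p).
  by move=> c; rewrite exprMn {1}ea; ring.
have trc : forall c, c = pi * (c / pi) by move=> c; rewrite mulrC divfK.
have trv : forall c, a' - c ^+ p != 0 ->
    a - (pi * c) ^+ p != 0 /\ v (a - (pi * c) ^+ p) = v a + v (a' - c ^+ p).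
  by move=> c h; rewrite tr mulf_neq0 // (vM hv) // vpp.
have F1 : forall c, a - c ^+ p != 0 -> v (a - c ^+ p) < v a + beta.
  move=> c h; rewrite ltNge; apply/negP => hge; apply: Hnle => t [ht tle].
  by split => //; exists c; split => //; lra.
have Imp : forall c, a - c ^+ p != 0 -> v a < v (a - c ^+ p) ->
    exists d, a - d ^+ p != 0 /\
      v (a - d ^+ p) = v a + w + (v (a - c ^+ p) - v a) / p%:R.
  move=> c h1 h2.
  have h3 := F1 c h1.
  move: h1 h2 h3; rewrite (trc c) tr.
  set c' := c / pi => h1 h2 h3.
  have b0 : a' - c' ^+ p != 0 by apply: contraNneq h1 => ->; rewrite mulr0.
  have [_ vb] := trv c' b0; rewrite tr in vb.
  rewrite vb in h2 h3 *.
  have hK : vKp v p (v (a' - c' ^+ p)).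
    apply: bnd_vKp; first exact: vgroup_v.
    by exists 2%N; rewrite mulr2n; lra.
  have [d' [_ [d0 vd]]] := part1_core a'0 va' b0 ltac:(lra) hK.
  have [e0 ve] := trv d' d0.
  exists (pi * d'); split => //; rewrite ve vd.
  have -> : v a + v (a' - c' ^+ p) - v a = v (a' - c' ^+ p) by ring.
  ring.
have F2 : exists c0, a - c0 ^+ p != 0 /\ v a + w <= v (a - c0 ^+ p).
  have a'r : vring v a' by right; rewrite va'.
  have [y [z [yr [zr e]]]] := hdr a'r.
  have [e0|e0] := eqVneq (a' - y ^+ p) 0.
    exfalso.
    have ea' : a' = y ^+ p by apply/eqP; rewrite -subr_eq0 e0.
    have y0 : y != 0.
      by apply: contraNneq a'0 => y0; rewrite ea' y0 expr0n gtn_eqF ?prime_gt0.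
    have vy : v y = 0.
      by apply: mulrn_p_inj; rewrite -(vX hv) // mul0rn -ea'.
    set E := (p%:R : K) ^+ 2.
    have E0 : E != 0 by rewrite expf_neq0.
    have vE : v E = w *+ 2 by rewrite (vX hv).
    have hg : vgt (a' - y ^+ p - E ^+ p) (w + v E).
      rewrite e0 sub0r; apply: (gtN hv); right; rewrite (vX hv) // vE.
      have := mulrn_p_ge (s := w *+ 2) ltac:(rewrite mulr2n; lra).
      rewrite mulr2n; lra.
    have [d0 vd] := step y0 vy E0 ltac:(rewrite vE mulr2n; lra) hg.
    have [f0 vf] := trv _ d0.
    have := F1 _ f0; rewrite vf vd vE mulr2n; lra.
  have z0 : z != 0 by apply: contraNneq e0 => z0; rewrite e z0 mulr0.
  have [f0 vf] := trv _ e0.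
  exists (pi * y); split => //; rewrite vf e (vM hv) //.
  case: zr => [ez|hz]; first by move: z0; rewrite ez eqxx.
  lra.
have [c0 [c00 hc0]] := F2.
have [d1 [d10 vd1]] := Imp c0 c00 ltac:(lra).
have r1 : 0 < (v (a - c0 ^+ p) - v a) / p%:R by apply: divr_gt0; lra.
have halpha : vhull v (v a + beta).
  exists p.-1; split; first by rewrite -subn1 subn_gt0 p2.
  rewrite mulrnDl; apply: (vgroupD hv); first (apply: (vgroupMn hv); exact: vgroup_v).
  have -> : beta *+ p.-1 = w *+ p.
    by rewrite -[beta *+ _]mulr_natr -[w *+ p]mulr_natr hQ hbQ mulrC.
  apply: (vgroupMn hv); exact: vgroup_v.
pose H := fun h => vhull v h /\ forall c, a - c ^+ p != 0 -> v a < v (a - c ^+ p) ->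
    - (v a + beta - v (a - c ^+ p)) < h /\ h < v a + beta - v (a - c ^+ p).
have H0 : H 0.
  split; first exact: vhull_group (vgroup0 hv).
  by move=> c h1 h2; have := F1 c h1; lra.
split.
  split.
    move=> t [ht tle]; split => //; exists d1; split => //; lra.
  move=> h.
  have hd1 : dist v p a (v (a - d1 ^+ p)).
    split; first by apply: vhull_group; exact: vgroup_v.
    by exists d1; split => //; exact: lexx.
  have [_ hle] := h _ hd1.
  lra.
exists H; split; [|split].
- split; first by move=> g [].
  split => //.
  split.
    move=> g h [hg Hg] [hh Hh]; split; first exact: vhullB.
    move=> c h1 h2.
    have [d [d0 vd]] := Imp c h1 h2.
    set r := (v (a - c ^+ p) - v a) / p%:R in vd.
    have er : v (a - c ^+ p) = v a + p%:R * r by rewrite /r mulrC divfK //; ring.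
    have r0 : 0 < r by rewrite /r; apply: divr_gt0; lra.
    have hd : v a < v (a - d ^+ p) by lra.
    have := Hg d d0 hd; have := Hh d d0 hd.
    have := F1 d d0; rewrite vd er.
    set del := v a + beta - (v a + w + r).
    have key : v a + beta - (v a + p%:R * r) = p%:R * del by rewrite /del; nra.
    rewrite key => hdel.
    have : del + del <= p%:R * del by rewrite /del; nra.
    lra.
  move=> g h t [hg Hg] [hh Hh] ht gt th; split => // c h1 h2.
  have := Hg c h1 h2; have := Hh c h1 h2; lra.
- case=> _ Hw; have := Hw c0 c00 ltac:(lra); lra.
- move=> t; split.
    case=> ht [c [hc hle]].
    exists (t - (v a + beta)); split; last by ring.
    split; first exact: vhullB.
    move=> h [_ Hh].
    have [lt|le] := ltP (v a) (v (a - c ^+ p)).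
      by have := Hh c hc lt; lra.
    by have := Hh c0 c00 ltac:(lra); lra.
  case=> u [[hu Hu] ->].
  split; first exact: vhullD.
  apply: NNPP => hn.
  have u0 := Hu 0 H0.
  suff : u < u by rewrite ltxx.
  apply: Hu; split => // c h1 h2.
  have : v (a - c ^+ p) < v a + beta + u.
    by rewrite ltNge; apply/negP => hle; apply: hn; exists c.
  by have := F1 c h1; lra.
Qed.

End Main.

Theorem proposition6p6 (K : fieldType) (G : realFieldType) (v : K -> G) (p : nat) :
  valuation v ->
  [pchar K] =i pred0 ->
  prime p -> 0 < v p%:R ->
  gdr v p ->
  (* part 1 *)
  (forall a : K, vring v a -> a != 0 -> v a = 0 ->
     forall c : K, vring v c -> a - c ^+ p != 0 ->
       0 < v (a - c ^+ p) -> vKp v p (v (a - c ^+ p)) ->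
       exists d : K, vring v d /\ a - d ^+ p != 0 /\
         v (a - d ^+ p) = v p%:R + v (a - c ^+ p) / p%:R) /\
  (* part 2 *)
  (forall a : K, vring v a -> a != 0 -> vKp v p (v a) ->
     cut_lt (dist v p a) (cut_pt v (v a + (p%:R / (p.-1)%:R) * v p%:R)) ->
     cut_lt (cut_pt v (v a + v p%:R)) (dist v p a) /\
     exists H : G -> Prop,
       convex_subgroup (vhull v) H /\ ~ H (v p%:R) /\
       cut_eq (dist v p a)
              (cut_shift (v a + (p%:R / (p.-1)%:R) * v p%:R) (cut_minus v H))).
Proof.
move=> hv hc hp hw [hdr hdp].
have hpK : (p%:R : K) != 0.
  by have := hc p; rewrite !inE hp /= => ->.
split.
  move=> a ar a0 va c cr b0 bpos hK.
  exact: (part1_core hv hp hw hdr hdp hpK a0 va b0 bpos hK).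
move=> a ar a0 hKa hlt.
exact: (part2 hv hp hw hdr hdp hpK ar a0 hKa hlt).
Qed.
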